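(* Let $(W,S)$ be a chordal Coxeter system, let $A=\{a,b,c\}$ be a maximal irreducible simplex of $(W,S)$, and let $d\in S-(A\cup A^\perp)$ be such that $\{a,b,d\}$ is a simplex. Then $\{a,b\}\cup A^\perp$ is a $(c,d)$-separator of $S$.
   Context: Coxeter system $(W,S)$: $W=\langle S\mid (st)^{m(s,t)}\ (m(s,t)<\infty)\rangle$, $m(s,s)=1$, $m(s,t)=m(t,s)\in\{2,\dots,\infty\}$. $\Gamma(W,S)$: graph on $S$ with edge $\{s,t\}$ iff $s\ne t$, $m(s,t)<\infty$; chordal: every cycle of length $\ge4$ has a chord. A simplex is $A\subseteq S$ with all $m(s,t)<\infty$; $A$ is irreducible if the graph on $A$ with edges $m(s,t)\ge3$ is connected; a maximal irreducible simplex is an irreducible simplex not properly contained in another irreducible simplex. $A^\perp=\{s\in S: m(s,x)=2\ \forall x\in A\}$. For $c,d\in S$, $B\subseteq S$ is a $(c,d)$-separator of $S$ if $c,d\notin B$ and $c$ and $d$ lie in different connected components of $\Gamma(W,S)-B$. *)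

(* Defs.v *)
From mathcomp Require Import all_boot.
Set Implicit Arguments. Unset Strict Implicit. Unset Printing Implicit Defensive.

(* A Coxeter system (W,S) with S a finite set, given by its Coxeter matrix
   m : S -> S -> nat, where the value 0 encodes m(s,t) = infinity.
   (W is determined by the presentation; every notion below only depends on m.) *)
Definition coxeter_matrix (S : finType) (m : S -> S -> nat) : Prop :=
  (forall s, m s s = 1) /\
  (forall s t, m s t = m t s) /\
  (forall s t, s != t -> m s t != 1).

Section Coxeter.
Variables (S : finType) (m : S -> S -> nat).

Definition mfin (s t : S) : bool := m s t != 0.
Definition mge3 (s t : S) : bool := (m s t == 0) || (3 <= m s t).

Definition gedge : rel S := fun s t => (s != t) && mfin s t.

Definition chordal : Prop :=
  forall p : seq S, 4 <= size p -> uniq p -> cycle gedge p ->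
    exists x y, [/\ x \in p, y \in p, gedge x y, y != next p x & x != next p y].

Definition simplex (A : {set S}) : bool :=
  [forall s in A, forall t in A, mfin s t].

Definition irr_rel (A : {set S}) : rel S :=
  fun s t => [&& s \in A, t \in A, s != t & mge3 s t].
Definition irreducible (A : {set S}) : Prop :=
  forall s t, s \in A -> t \in A -> connect (irr_rel A) s t.

Definition irreducible_simplex (A : {set S}) : Prop :=
  simplex A /\ irreducible A.

Definition maximal_irreducible_simplex (A : {set S}) : Prop :=
  irreducible_simplex A /\
  forall B : {set S}, irreducible_simplex B -> A \subset B -> B = A.

Definition perp (A : {set S}) : {set S} :=
  [set s | [forall x in A, m s x == 2]].

Definition separator (B : {set S}) (c d : S) : Prop :=
  c \notin B /\ d \notin B /\
  ~~ connect (fun s t => [&& s \notin B, t \notin B & gedge s t]) c d.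

End Coxeter.

(* Main.v *)
Require Import Defs.
From mathcomp Require Import all_boot.
From mathcomp Require Import zify.
Set Implicit Arguments. Unset Strict Implicit. Unset Printing Implicit Defensive.

Lemma last_take_nth (T : Type) (x : T) (p : seq T) i :
  i <= size p -> last x (take i p) = nth x (x :: p) i.
Proof.
elim: p x i => [|y p IH] x [|i] //= Hi.
by rewrite IH // (set_nth_default x).
Qed.

Lemma gedge_sym (S : finType) (m : S -> S -> nat) :
  coxeter_matrix m -> forall s t, gedge m s t = gedge m t s.
Proof.
by case=> _ [Hs _] s t; rewrite /gedge /mfin Hs eq_sym.
Qed.

Lemma gedge_irr (S : finType) (m : S -> S -> nat) s : gedge m s s = false.
Proof. by rewrite /gedge eqxx. Qed.

Lemma next_in (S : finType) (v z : S) (q : seq S) :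
  v \notin q -> z \in q -> next (v :: q) z = nth v q (index z q).+1.
Proof.
move=> Hv Hz; rewrite next_nth in_cons Hz orbT /=.
have -> : (v == z) = false by apply/eqP=> E; rewrite E Hz in Hv.
by [].
Qed.

Lemma chord_lemma (S : finType) (m : S -> S -> nat) :
  coxeter_matrix m -> chordal m ->
  forall n (v y : S) (ys : seq S), size ys < n -> 0 < size ys -> uniq (y :: ys) ->
  path (gedge m) y ys ->
  (forall i l, i.+1 < l < size (y :: ys) ->
     ~~ gedge m (nth v (y :: ys) i) (nth v (y :: ys) l)) ->
  v \notin y :: ys -> gedge m v y -> gedge m v (last y ys) -> gedge m v (nth v (y :: ys) 1).
Proof.
move=> Hcox Hch; elim=> [|n IH] v y ys // Hsz Hsz1 Hu Hp Hind Hv Hv0 Hvl.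
case Hg: (gedge m v (nth v (y :: ys) 1)) => //.
case: ys Hsz Hsz1 Hu Hp Hind Hv Hvl Hg => [//|z [|z' r]] Hsz _ Hu Hp Hind Hv Hvl Hg.
  by rewrite /= Hvl in Hg.
set q := [:: y, z, z' & r].
have Hcyc : cycle (gedge m) (v :: q).
  rewrite /cycle rcons_cons /= Hv0 /=.
  have := Hp; rewrite /= => /andP [-> /andP [-> Hp']].
  by rewrite -/(path _ _ (rcons _ _)) rcons_path Hp' /= gedge_sym // -/(last _ _).
have Hu' : uniq (v :: q) by rewrite cons_uniq Hv.
have [x [w [Hx Hw Hxw Hn1 Hn2]]] := Hch (v :: q) isT Hu' Hcyc.
have H1 : forall w, w \in q -> gedge m v w -> w != y -> v != next (v :: q) w -> false.
  move=> w0 Hw0 Hvw Hwy Hnx.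
  rewrite next_in // in Hnx.
  set i := index w0 q in Hnx.
  have Hiq : i < size q by rewrite index_mem.
  have Hwi : nth v q i = w0 by rewrite nth_index.
  have Hi1 : i.+1 < size q.
    rewrite ltnNge; apply/negP => Hle.
    by rewrite nth_default ?eqxx in Hnx.
  have Hi0 : i != 0.
    by apply/eqP => E; rewrite E /= in Hwi; rewrite -Hwi eqxx in Hwy.
  case Hi: i Hi0 Hi1 Hwi => [//|[|i']] _ Hi1 Hwi.
    by move: Hg; rewrite -Hwi /q in Hvw => H; rewrite H in Hvw.
  have Hr : i'.+2 < size [:: z, z' & r] by move: Hi1; rewrite /q /=.
  have Hsz' : size (take i'.+2 [:: z, z' & r]) = i'.+2 by rewrite size_takel // ltnW.
  have Htk : y :: take i'.+2 [:: z, z' & r] = take i'.+3 q by [].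
  have Hnt : forall j, j < i'.+3 -> nth v (take i'.+3 q) j = nth v q j.
    by move=> j Hj; rewrite nth_take.
  have Hres := IH v y (take i'.+2 [:: z, z' & r]).
  rewrite Htk Hsz' in Hres.
  have Hpt : path (gedge m) y (take i'.+2 [:: z, z' & r]) by apply: take_path.
  move: Hg; rewrite Hres //.
  - apply: leq_trans Hr _; by rewrite -ltnS.
  - by apply: take_uniq.
  - move=> i0 l0 /andP [H1 H2]; have Hsz3 : size (take i'.+3 q) = i'.+3 by rewrite size_takel // ltnW.
    rewrite Hsz3 in H2.
    rewrite !Hnt //; last by apply: ltn_trans H2; apply: ltn_trans H1.
    apply: Hind; rewrite H1 /=; apply: leq_trans H2 _; exact: ltnW.
  - by apply/negP => /mem_take; apply/negP.
  - rewrite last_take_nth; last by apply: ltnW.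
    rewrite (set_nth_default v); last by apply: ltn_trans Hi1.
    by rewrite Hwi.
have Hnv : next (v :: q) v = y by rewrite next_nth mem_head /= eqxx.
have H2 : forall x w, x \in q -> w \in q -> index x q < index w q ->
    gedge m x w -> w != next (v :: q) x -> false.
  move=> x0 w0 Hx0 Hw0 Hlt Hg0; rewrite next_in //.
  have Hwq : index w0 q < size q by rewrite index_mem.
  case: (ltngtP (index x0 q).+1 (index w0 q)) => [Hlt2|Hlt2|Heq].
  - have := Hind (index x0 q) (index w0 q) (ltac:(by rewrite Hlt2 Hwq)).
    by rewrite !nth_index // Hg0.
  - by move: Hlt Hlt2; rewrite ltnS => A1 A2; have := leq_ltn_trans A2 A1; rewrite ltnn.
  - by rewrite Heq nth_index // eqxx.
move: Hx; rewrite in_cons => /orP [/eqP Ex | Hxq].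
  subst x; move: Hw; rewrite in_cons => /orP [/eqP Ew | Hwq].
    by subst w; rewrite gedge_irr in Hxw.
  by apply: (H1 w Hwq Hxw _ Hn2); rewrite -Hnv.
move: Hw; rewrite in_cons => /orP [/eqP Ew | Hwq].
  subst w; apply: (H1 x Hxq _ _ Hn1); first by rewrite gedge_sym.
  by rewrite -Hnv.
case: (ltngtP (index x q) (index w q)) => [Hlt|Hlt|Heq].
- exact: (H2 x w Hxq Hwq Hlt Hxw Hn1).
- by apply: (H2 w x Hwq Hxq Hlt _ Hn2); rewrite gedge_sym.
- have : x = w by rewrite -(nth_index v Hxq) Heq nth_index.
  by move=> E; subst w; rewrite gedge_irr in Hxw.
Qed.

Lemma path_notinB (S : finType) (B : {set S}) (g : rel S) c p :
  path (fun s t => [&& s \notin B, t \notin B & g s t]) c p ->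
  forall x, x \in p -> x \notin B.
Proof.
elim: p c => [|y p IH] c //= /andP [/and3P [_ Hy _] Hp] x.
rewrite in_cons => /orP [/eqP -> // | Hx]; exact: IH Hp x Hx.
Qed.

Lemma simplex_mfin (S : finType) (m : S -> S -> nat) X s t :
  simplex m X -> s \in X -> t \in X -> mfin m s t.
Proof. by move=> /forall_inP H Hs Ht; move/forall_inP: (H s Hs); apply. Qed.

Theorem lemma4p1 (S : finType) (m : S -> S -> nat) (a b c d : S) :
  coxeter_matrix m ->
  chordal m ->
  a != b -> b != c -> a != c ->
  maximal_irreducible_simplex m [set a; b; c] ->
  d \notin [set a; b; c] :|: perp m [set a; b; c] ->
  simplex m [set a; b; d] ->
  separator m ([set a; b] :|: perp m [set a; b; c]) c d.
Proof.
move=> Hcox Hch Hab Hbc Hac [[HsA HirrA] Hmax] Hd HsD.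
have [Hdiag [Hsym Hne1]] := Hcox.
set A := [set a; b; c] in HsA HirrA Hmax Hd *.
set B := [set a; b] :|: perp m A.
have HaA : a \in A by rewrite !inE eqxx.
have HbA : b \in A by rewrite !inE eqxx orbT.
have HcA : c \in A by rewrite !inE eqxx !orbT.
have HcB : c \notin B.
  rewrite /B in_setU negb_or !inE negb_or (eq_sym c a) (eq_sym c b) Hac Hbc /=.
  apply/negP => /forall_inP H; have := H c HcA; by rewrite Hdiag.
move: Hd; rewrite in_setU negb_or => /andP [HdA Hdp].
have Hda : d != a by apply/eqP => E; rewrite E HaA in HdA.
have Hdb : d != b by apply/eqP => E; rewrite E HbA in HdA.
have Hdc : d != c by apply/eqP => E; rewrite E HcA in HdA.
have HdB : d \notin B by rewrite /B in_setU negb_or Hdp andbT !inE negb_or Hda Hdb.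
split; first exact: HcB.
split; first exact: HdB.
set e := fun s t => [&& s \notin B, t \notin B & gedge m s t].
apply/negP => /connectP [p0 Hp0 Hl0].
suff Hmin : forall n p, size p < n -> path e c p -> d = last c p -> False.
  exact: (Hmin (size p0).+1 p0 (ltnSn _) Hp0 Hl0).
elim=> [//|n IH] p1 Hsz1 Hp1.
case/shortenP: Hp1 => p Hp Hu Hsub Hl.
have Hszp : size p <= n.
  apply: leq_trans (uniq_leq_size _ Hsub) _; first by move: Hu; rewrite cons_uniq => /andP [].
  by rewrite -ltnS.
have Hmin : forall p', size p' < size p -> path e c p' -> d = last c p' -> False.
  by move=> p' H; apply: IH; apply: leq_trans H Hszp.
have Hnot : forall x, x \in c :: p -> x \notin B.
  move=> x; rewrite in_cons => /orP [/eqP -> // | Hx]; exact: path_notinB Hp x Hx.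
have Hind : forall x0 i l, i.+1 < l < size (c :: p) ->
    ~~ gedge m (nth x0 (c :: p) i) (nth x0 (c :: p) l).
  move=> x0 i [|l'] /andP [Hil Hl']; first by [].
  apply/negP => Hg.
  have Hl'p : l' < size p by [].
  have Hil' : i < l' by [].
  have Hisz : i <= size p by apply: ltnW; apply: ltn_trans Hil' Hl'p.
  have Hip : i < size (c :: p) by apply: ltn_trans Hl'; apply: ltn_trans Hil.
  rewrite (set_nth_default c x0 Hip) (set_nth_default c x0 Hl') /= in Hg.
  apply: (Hmin (take i p ++ drop l' p)).
  - rewrite size_cat size_takel //.
    rewrite size_drop -[X in _ < X](subnKC (ltnW Hl'p)) ltn_add2r; exact: Hil'.
  - rewrite cat_path take_path //= last_take_nth //.
    rewrite (drop_nth c Hl'p) /=.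
    apply/andP; split.
      apply/and3P; split => //.
        by apply: Hnot; apply: mem_nth.
      by apply: Hnot; rewrite in_cons mem_nth ?orbT.
    have Hp2 : path e c (take l'.+1 p ++ drop l'.+1 p) by rewrite cat_take_drop.
    by move: Hp2; rewrite cat_path => /andP [_]; rewrite last_take_nth.
  - rewrite Hl last_cat (drop_nth c Hl'p) /=.
    rewrite -{1}(cat_take_drop l'.+1 p) last_cat last_take_nth //.
case: p Hp Hu Hsub Hl Hszp Hmin Hnot Hind => [|x1 r] Hp Hu Hsub Hl Hszp Hmin Hnot Hind.
  by rewrite /= in Hl; rewrite Hl eqxx in Hdc.
have Hgp : path (gedge m) c (x1 :: r).
  by apply: sub_path Hp => s t /and3P [].
have Hv : forall v, v \in B -> v \in A -> v != d -> gedge m v x1.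
  move=> v HvB HvA Hvd.
  have := chord_lemma Hcox Hch (ltnSn (size (x1 :: r))) (_ : 0 < size (x1 :: r)) Hu Hgp (Hind v).
  apply => //.
  - by apply/negP => /Hnot; rewrite HvB.
  - rewrite /gedge (simplex_mfin HsA HvA HcA) andbT.
    by apply/eqP => E; move: HcB; rewrite -E HvB.
  - rewrite -Hl /gedge Hvd /=. apply: (simplex_mfin HsD).
    + move: HvA; rewrite !inE => /orP [-> // | /eqP E].
      by move: HcB; rewrite -E HvB.
    + by rewrite !inE eqxx !orbT.
have HaB : a \in B by rewrite /B !inE eqxx.
have HbB : b \in B by rewrite /B !inE eqxx orbT.
have Hax := Hv a HaB HaA (ltac:(by rewrite eq_sym)).
have Hbx := Hv b HbB HbA (ltac:(by rewrite eq_sym)).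
move: Hp => /= /andP [/and3P [_ Hx1B Hcx] _].
have Hx1a : x1 != a by apply/eqP => E; rewrite E HaB in Hx1B.
have Hx1b : x1 != b by apply/eqP => E; rewrite E HbB in Hx1B.
have Hx1c : x1 != c by apply/eqP => E; rewrite E gedge_irr in Hcx.
have Hx1A : x1 \notin A by rewrite !inE negb_or negb_or Hx1a Hx1b Hx1c.
have Hadj : forall t, t \in A -> mfin m x1 t.
  move=> t; rewrite !inE => /orP [/orP [/eqP ->|/eqP ->]|/eqP ->].
  - by move: Hax => /andP [_]; rewrite /mfin Hsym.
  - by move: Hbx => /andP [_]; rewrite /mfin Hsym.
  - by move: Hcx => /andP [_]; rewrite /mfin Hsym.
set A' := x1 |: A.
have HsA' : simplex m A'.
  apply/forall_inP => s Hs; apply/forall_inP => t Ht.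
  move: Hs Ht; rewrite !in_setU1 => /orP [/eqP -> | Hs] /orP [/eqP -> | Ht].
  - by rewrite /mfin Hdiag.
  - exact: Hadj.
  - by rewrite /mfin Hsym; apply: Hadj.
  - exact: simplex_mfin HsA Hs Ht.
have Hsymr : symmetric (irr_rel m A').
  move=> s t; rewrite /irr_rel /mge3 Hsym eq_sym.
  by case: (s \in A'); case: (t \in A').
have Hsub' : subrel (irr_rel m A) (connect (irr_rel m A')).
  move=> u w /and4P [Hu' Hw' Huw Hm]; apply: connect1.
  by rewrite /irr_rel !in_setU1 Hu' Hw' Huw Hm !orbT.
have Hc : forall s, s \in A' -> connect (irr_rel m A') c s.
  move=> s; rewrite in_setU1 => /orP [/eqP -> | Hs]; last first.
    by apply: (connect_sub Hsub'); apply: HirrA.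
  move: Hx1B; rewrite /B in_setU negb_or => /andP [_].
  rewrite /perp inE => /forall_inPn [y Hy Hmy].
  apply: connect_trans (connect_sub Hsub' (HirrA c y HcA Hy)) (connect1 _).
  have Hyx : y != x1 by apply/eqP => E; rewrite -E Hy in Hx1A.
  rewrite /irr_rel !in_setU1 eqxx Hy orbT Hyx /= /mge3 Hsym.
  have := Hne1 x1 y (ltac:(by rewrite eq_sym)).
  by move: Hmy; case: (m x1 y) => [|[|[|k]]].
have HirrA' : irreducible m A'.
  move=> s t Hs Ht; apply: connect_trans (Hc t Ht).
  by rewrite (sym_connect_sym Hsymr); apply: Hc.
have := Hmax A' (conj HsA' HirrA') (subsetUr _ _).
move=> E; have : x1 \in A' by rewrite in_setU1 eqxx.
by rewrite E (negbTE Hx1A).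
Qed.
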